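(* Under the hypotheses of the approximate projection proposition ($V$ Hilbert, $Q\subset V$ with $M_Q<\infty$ and $-Q=Q$, $f:V\to\mathbb R^k$ linear with the Johnson–Lindenstrauss property on $Q$ with parameter $\epsilon>0$), let $C_Q:=\inf\{c\in\mathbb R_+:\|\mathbf v\|_Q\le c\|\mathbf v\|\ \text{for all }\mathbf v\in\mathrm{span}\{Q\}\}$. Then for every $\mathbf v\in\mathrm{span}\{Q\}$ such that $(f^*\circ f)(\mathbf v)\in\mathrm{span}\{Q\}$, $$\|(\mathbb I_V-f^*\circ f)(\mathbf v)\|\le\epsilon M_Q^2C_Q^2\|\mathbf v\|.$$
   Context: $M_Q=\sup\{\|\mathbf v\|:\mathbf v\in Q\}$; $\|\mathbf v\|_Q=\inf\{\sum_j|\lambda_j|:\sum_j\lambda_j\mathbf v_j=\mathbf v,\ \mathbf v_j\in Q\}$ over finite combinations. Johnson–Lindenstrauss property with parameter $\epsilon$: $(1-\epsilon)\|\mathbf v_1-\mathbf v_2\|^2\le\|f(\mathbf v_1)-f(\mathbf v_2)\|^2\le(1+\epsilon)\|\mathbf v_1-\mathbf v_2\|^2$ for all $\mathbf v_1,\mathbf v_2\in Q$, the norm on $\mathbb R^k$ being induced by a fixed inner product; $f^*$ is the adjoint of $f$. *)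

(* Defs.v *)
From HB Require Import structures.
From mathcomp Require Import all_boot all_order all_algebra.
From mathcomp Require Import all_classical all_reals all_analysis.
Set Implicit Arguments. Unset Strict Implicit. Unset Printing Implicit Defensive.
Import Order.TTheory GRing.Theory Num.Theory.
Import numFieldNormedType.Exports.
Local Open Scope classical_set_scope.
Local Open Scope ring_scope.

(* A real inner product on a normed space V that induces its norm.
   Together with completeness of V (completeNormedModType) this makes V a
   real Hilbert space. *)
Definition inner_product_of_norm (R : realType) (V : normedModType R)
  (ip : V -> V -> R) : Prop :=
  [/\ forall (a : R) (u v w : V), ip (a *: u + v) w = a * ip u w + ip v w,
      forall u v : V, ip u v = ip v u
    & forall v : V, ip v v = `|v| ^+ 2].

Definition inner_product_rV (R : realType) (k : nat)
  (ip : 'rV[R]_k -> 'rV[R]_k -> R) : Prop :=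
  [/\ forall (a : R) (u v w : 'rV[R]_k), ip (a *: u + v) w = a * ip u w + ip v w,
      forall u v : 'rV[R]_k, ip u v = ip v u
    & forall w : 'rV[R]_k, w != 0 -> 0 < ip w w].

Definition combo (R : realType) (V : normedModType R) (s : seq (R * V)) : V :=
  \sum_(p <- s) p.1 *: p.2.

Definition span_set (R : realType) (V : normedModType R) (Q : set V) : set V :=
  [set v | exists s : seq (R * V), (forall p, p \in s -> Q p.2) /\ combo s = v].

Definition M_Q (R : realType) (V : normedModType R) (Q : set V) : R :=
  sup [set `|v| | v in Q].

Definition atomic_norm (R : realType) (V : normedModType R) (Q : set V) (v : V) : R :=
  inf [set \sum_(p <- s) `|p.1| | s in
       [set s : seq (R * V) | (forall p, p \in s -> Q p.2) /\ combo s = v]].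

(* C_Q = inf { c >= 0 : |v|_Q <= c |v| for all v in span Q }, in \bar R
   (it is +oo when no such c exists). *)
Definition C_Q (R : realType) (V : normedModType R) (Q : set V) : \bar R :=
  ereal_inf [set c%:E | c in
    [set c : R | 0 <= c /\ forall v, span_set Q v -> atomic_norm Q v <= c * `|v|]].

(* Main.v *)
Require Import Defs.
From HB Require Import structures.
From mathcomp Require Import all_boot all_order all_algebra.
From mathcomp Require Import all_classical all_reals all_analysis.
From mathcomp Require Import ring lra.
Import Order.TTheory GRing.Theory Num.Theory.
Import numFieldNormedType.Exports.
Local Open Scope classical_set_scope.
Local Open Scope ring_scope.

Section Bil.
Variables (R : realType) (W : lmodType R) (B : W -> W -> R).
Hypothesis Hl : forall (a : R) (u v w : W), B (a *: u + v) w = a * B u w + B v w.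
Hypothesis Hs : forall u v : W, B u v = B v u.

Lemma B0l w : B 0 w = 0.
Proof. have := Hl 1 0 0 w; rewrite scale1r addr0 mul1r; lra. Qed.
Lemma BDl u v w : B (u + v) w = B u w + B v w.
Proof. by rewrite -[u]scale1r Hl mul1r scale1r. Qed.
Lemma BZl a u w : B (a *: u) w = a * B u w.
Proof. by rewrite -[a *: u]addr0 Hl B0l addr0. Qed.
Lemma BNl u w : B (- u) w = - B u w.
Proof. by rewrite -scaleN1r BZl mulN1r. Qed.
Lemma BBl u v w : B (u - v) w = B u w - B v w.
Proof. by rewrite BDl BNl. Qed.
Lemma BDr u v w : B w (u + v) = B w u + B w v.
Proof. by rewrite (Hs w (u + v)) BDl !(Hs w). Qed.
Lemma BBr u v w : B w (u - v) = B w u - B w v.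
Proof. by rewrite (Hs w (u - v)) BDl BNl !(Hs w). Qed.
Lemma polar a b : B (a + b) (a + b) - B (a - b) (a - b) = 4 * B a b.
Proof. rewrite !BBl !BDl !BBr !BDr (Hs b a); ring. Qed.
Lemma parall a b : B (a + b) (a + b) + B (a - b) (a - b) = 2 * B a a + 2 * B b b.
Proof. rewrite !BBl !BDl !BBr !BDr (Hs b a); ring. Qed.
End Bil.

Lemma le_mul_inf (R : realType) (X c : R) (S : set R) :
  0 <= c -> S !=set0 -> (forall a, S a -> 0 <= a) ->
  (forall a, S a -> X <= c * a) -> X <= c * inf S.
Proof.
move=> c0 [a0 Sa0] Sge H.
have infge : 0 <= inf S by apply: lb_le_inf; [exists a0|move=> a Sa; exact: Sge].
have [ce|cn0] := eqVneq c 0.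
  subst c.
  by move: (H a0 Sa0); rewrite !mul0r.
have cp : 0 < c by rewrite lt_def cn0 c0.
have : X / c <= inf S.
  apply: lb_le_inf; first by exists a0.
  by move=> a Sa; rewrite ler_pdivrMr // mulrC; apply: H.
by rewrite ler_pdivrMr // mulrC.
Qed.

Lemma combo_cons (R : realType) (V : normedModType R) p (s : seq (R * V)) :
  combo (p :: s) = p.1 *: p.2 + combo s.
Proof. by rewrite /combo big_cons. Qed.

Lemma combo_cat (R : realType) (V : normedModType R) (s t : seq (R * V)) :
  combo (s ++ t) = combo s + combo t.
Proof. by rewrite /combo big_cat. Qed.

Lemma combo_neg (R : realType) (V : normedModType R) (t : seq (R * V)) :
  combo (map (fun p => (- p.1, p.2)) t) = - combo t.
Proof. rewrite /combo big_map -sumrN; apply: eq_bigr => p _; by rewrite scaleNr. Qed.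

Lemma ge0E (R : realType) (r : R) : ((0 <= r%:E)%E) = (0 <= r).
Proof. exact: (lee_fin 0 r). Qed.

Theorem mainTheorem7 (R : realType) (V : completeNormedModType R)
  (ip : V -> V -> R) (k : nat) (ipk : 'rV[R]_k -> 'rV[R]_k -> R)
  (Q : set V) (f : {linear V -> 'rV[R]_k}) (fstar : 'rV[R]_k -> V) (eps : R) :
  inner_product_of_norm ip ->
  inner_product_rV ipk ->
  has_ubound [set `|v| | v in Q] ->
  [set - v | v in Q] = Q ->
  (forall (w : 'rV[R]_k) (v : V), ip (fstar w) v = ipk w (f v)) ->
  0 < eps ->
  (forall v1 v2, Q v1 -> Q v2 ->
     (1 - eps) * `|v1 - v2| ^+ 2 <= ipk (f v1 - f v2) (f v1 - f v2) /\
     ipk (f v1 - f v2) (f v1 - f v2) <= (1 + eps) * `|v1 - v2| ^+ 2) ->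
  forall v : V, span_set Q v -> span_set Q (fstar (f v)) ->
  ((`|v - fstar (f v)|)%:E <=
     (eps * M_Q Q ^+ 2)%:E * (C_Q Q * C_Q Q) * (`|v|)%:E)%E.
Proof.
move=> [ipl ips ipn] [kl ks kpos] Hub HQ Hadj Heps HJL v Sv Sfv.
set M := M_Q Q.
set K := eps * M ^+ 2.
have K0 : 0 <= K by rewrite /K mulr_ge0 ?sqr_ge0 // ltW.
pose D x y := ip x y - ipk (f x) (f y).
have Dl : forall a u x y, D (a *: u + x) y = a * D u y + D x y.
  move=> a u x y; rewrite /D linearD linearZ /= ipl kl; ring.
have Ds : forall x y, D x y = D y x by move=> x y; rewrite /D ips ks.
have D0 : forall y, D 0 y = 0 by move=> y; have := Dl 1 0 0 y; rewrite scale1r addr0 mul1r; lra.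
have bound1 : forall s y, `|D (combo s) y| <= \sum_(p <- s) `|p.1| * `|D p.2 y|.
  move=> s y; elim: s => [|p s IH].
    by rewrite /combo big_nil D0 normr0 big_nil.
  rewrite combo_cons big_cons -[p.1 *: p.2 + _]/(p.1 *: p.2 + _) Dl.
  apply: (le_trans (ler_normD _ _)); rewrite normrM lerD2l //.
have MQ : forall u, Q u -> 0 <= `|u| <= M.
  move=> u Qu; rewrite normr_ge0 /=; apply: sup_upper_bound; last by exists u.
  by split => //; exists `|u|, u.
have pair : forall u w, Q u -> Q w -> `|D u w| <= K.
  move=> u w Qu Qw.
  have Qw' : Q (- w) by rewrite -HQ; exists w.
  have [P1 P2] := HJL u (- w) Qu Qw'.
  have [N1 N2] := HJL u w Qu Qw.
  move: P1 P2; rewrite [f (- w)]raddfN !opprK.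
  have e1 := (@polar _ _ _ kl ks) (f u) (f w).
  have e2 := (@polar _ _ _ ipl ips) u w.
  have e3 := (@parall _ _ _ ipl ips) u w.
  rewrite !ipn in e2 e3.
  have /andP[u0 uM] := MQ u Qu; have /andP[w0 wM] := MQ w Qw.
  have uM2 : `|u| ^+ 2 <= M ^+ 2 by rewrite lerXn2r // ?nnegrE // (le_trans u0).
  have wM2 : `|w| ^+ 2 <= M ^+ 2 by rewrite lerXn2r // ?nnegrE // (le_trans w0).
  have eu : eps * `|u| ^+ 2 <= eps * M ^+ 2 by rewrite ler_wpM2l // ltW.
  have ew : eps * `|w| ^+ 2 <= eps * M ^+ 2 by rewrite ler_wpM2l // ltW.
  move=> P1 P2.
  have e4 : eps * `|u + w| ^+ 2 + eps * `|u - w| ^+ 2 =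
     2 * (eps * `|u| ^+ 2) + 2 * (eps * `|w| ^+ 2).
    by rewrite -mulrDr e3; ring.
  rewrite /D /K ler_norml; apply/andP; split; lra.
have bound2 : forall s t, (forall p, p \in s -> Q p.2) -> (forall p, p \in t -> Q p.2) ->
    `|D (combo s) (combo t)| <= K * (\sum_(p <- s) `|p.1|) * (\sum_(q <- t) `|q.1|).
  move=> s t Hs Ht.
  apply: (le_trans (bound1 s (combo t))).
  rewrite mulrAC mulrC mulr_suml big_seq_cond [X in _ <= X]big_seq_cond.
  apply: ler_sum => p /andP[ps _]; rewrite ler_wpM2l //.
  rewrite Ds; apply: (le_trans (bound1 t p.2)).
  rewrite mulr_sumr big_seq_cond [X in _ <= X]big_seq_cond.
  apply: ler_sum => q /andP[qt _]; rewrite mulrC ler_wpM2r //.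
  by apply: pair; [apply: Ht|apply: Hs].
set z := v - fstar (f v).
have Sz : span_set Q z.
  case: Sv => s [Hs Es]; case: Sfv => t [Ht Et].
  exists (s ++ map (fun p => (- p.1, p.2)) t); split.
    move=> p; rewrite mem_cat => /orP[/Hs //|/mapP[q /Ht qt ->] //].
  by rewrite combo_cat combo_neg Et Es.
have Hzz : `|z| ^+ 2 = D v z by rewrite -ipn /z (@BBl _ _ _ ipl) Hadj.
pose A x := atomic_norm Q x.
have Ane : forall x, span_set Q x ->
    [set \sum_(p <- s) `|p.1| | s in
       [set s : seq (R * V) | (forall p, p \in s -> Q p.2) /\ combo s = x]] !=set0.
  by move=> x [s Hs]; exists (\sum_(p <- s) `|p.1|), s.
have Age : forall x a, [set \sum_(p <- s) `|p.1| | s in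
       [set s : seq (R * V) | (forall p, p \in s -> Q p.2) /\ combo s = x]] a -> 0 <= a.
  by move=> x a [s _ <-]; apply: sumr_ge0 => p _.
have A0 : forall x, span_set Q x -> 0 <= A x.
  move=> x Sx; apply: lb_le_inf; first exact: Ane.
  by move=> a; apply: Age.
have key : `|z| ^+ 2 <= K * A v * A z.
  apply: le_mul_inf; [by rewrite mulr_ge0 // A0|exact: Ane|exact: Age|].
  move=> b [t [Ht Et] <-]; rewrite mulrAC.
  apply: le_mul_inf; [by rewrite mulr_ge0 //; apply: Age; exists t|exact: Ane|exact: Age|].
  move=> a [s [Hs Es] <-].
  rewrite Hzz -Es -Et mulrAC; apply: (le_trans (ler_norm _)); exact: bound2.
have C0 : (0 <= C_Q Q)%E.
  by apply: le_ereal_inf_tmp => y [c [c0 _] <-]; rewrite ge0E.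
have [->|zn0] := eqVneq z 0.
  rewrite normr0; apply: mule_ge0; last by rewrite ge0E.
  by apply: mule_ge0; [rewrite ge0E|exact: mule_ge0].
have zp : 0 < `|z| by rewrite normr_gt0.
have vp : 0 < `|v|.
  rewrite normr_gt0; apply: contra zn0 => /eqP v0.
  have fs0 : fstar 0 = 0.
    apply/eqP; rewrite -normr_eq0 -sqrf_eq0 -ipn Hadj.
    by rewrite (@B0l _ _ _ kl).
  by rewrite /z v0 raddf0 fs0 subr0.
have Apos : forall x, span_set Q x -> 0 < `|x| -> forall r, C_Q Q = r%:E -> A x <= r * `|x|.
  move=> x Sx xp r Cr.
  have : ((A x / `|x|)%:E <= C_Q Q)%E.
    apply: le_ereal_inf_tmp => y [c [c0 Hc] <-]; rewrite lee_fin ler_pdivrMr //.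
    exact: Hc.
  by rewrite Cr lee_fin ler_pdivrMr.
case HC: (C_Q Q) => [r| |].
- have r0 : 0 <= r by move: C0; rewrite HC ge0E.
  rewrite -!EFinM lee_fin.
  have Av := Apos v Sv vp r HC; have Az := Apos z Sz zp r HC.
  have Av0 := A0 v Sv; have Az0 := A0 z Sz.
  have h1 : K * A v * A z <= K * (r * `|v|) * (r * `|z|).
    by rewrite -mulrA -[X in _ <= X]mulrA ler_wpM2l //; apply: ler_pM.
  have h2 : `|z| * `|z| <= (K * (r * r) * `|v|) * `|z|.
    rewrite -expr2; apply: (le_trans key); apply: (le_trans h1); rewrite le_eqVlt; apply/orP; left; apply/eqP; ring.
  by rewrite -(ler_pM2r zp).
- rewrite mulyy.
  have Kp : 0 < K.
    rewrite lt_def K0 andbT; apply/eqP => K0'.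
    move: key; rewrite K0' !mul0r => key'; have := exprn_gt0 2 zp; lra.
  by rewrite gt0_muley ?lte_fin // gt0_mulye ?lte_fin // leey.
- by move: C0; rewrite HC.
Qed.
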